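(* Let $D$ be a Dyck shape of length $2n$ and $1\leq i\leq n+1$. Then there is a unique way to add to $D$ a ribbon (i.e., a unique Dyck shape $E$ of length $2n+2$ with $D\subset E$ and $E/D$ a ribbon) such that the number of South-West–to–North-East diagonals met by the ribbon $E/D$ is $i$.
   Context: The staircase partition of size $n$ is $\delta_n=(n,n-1,\dots,1)$. A Dyck shape of length $2n$ is a skew shape $\delta_n/\lambda$ where $\lambda$ is a Young diagram with $\lambda\subset\delta_{n-1}$. It is drawn in ''Japanese notation'': the French-convention Young diagram rotated by 135 degrees clockwise, so that the upper border of a Dyck shape of length $2n$ traces a Dyck path of length $2n$ (steps $\nearrow=(1,1)$, $\searrow=(1,-1)$ from $(0,0)$ to $(2n,0)$ staying at nonnegative height), and the cells are unit squares standing on a corner. In this picture the cells lie along two families of diagonals: the South-East to North-West diagonals (whose cell counts are the parts of $\lambda$'s complement structure) and the South-West to North-East diagonals. A skew shape is a ribbon if it is connected and contains no $2\times 2$ square. For Dyck shapes $D$, $E$ of lengths $2n$ and $2n+2$, arranged so that their leftmost cells coincide, one writes $D\sqsubset E$ (''$E$ is obtained from $D$ by addition of a ribbon'') if $D\subset E$ and $E/D$ is a ribbon. Equivalently, in terms of words over $\{\nearrow,\searrow\}$, $D\sqsubset E$ iff $E$ is obtained from $D\searrow\searrow$ by changing one $\searrow$ (any except the last one) into $\nearrow$, giving $n+1$ possibilities. *)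

(* Defs.v *)
From mathcomp Require Import all_boot.
Set Implicit Arguments. Unset Strict Implicit. Unset Printing Implicit Defensive.

(* A cell (r, c) of a Young diagram: row r, column c (0-based, French
   convention: row 0 at the bottom).  *)
Definition cell := (nat * nat)%type.

Definition is_partition (l : seq nat) : bool :=
  sorted geq l && all (fun x => 0 < x) l.

Definition sub_staircase (m : nat) (l : seq nat) : bool :=
  all (fun r => nth 0 l r <= m - r) (iota 0 (size l)).

(* l is the inner partition of a Dyck shape delta_n / l of length 2n,
   i.e. l is a partition with l inside delta_(n-1). *)
Definition dyck_shape (n : nat) (l : seq nat) : bool :=
  is_partition l && sub_staircase n.-1 l.

Definition skew_cells (n : nat) (l : seq nat) : pred cell :=
  fun x => (x.1 + x.2 < n) && (nth 0 l x.1 <= x.2).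

(* The cells of delta_n / l placed inside delta_(n+1) so that the
   leftmost cells coincide (in Japanese notation the leftmost cell of
   delta_n is (0, n-1), that of delta_(n+1) is (0, n): shift by one column). *)
Definition shifted_cells (n : nat) (l : seq nat) : pred cell :=
  fun x => (0 < x.2) && skew_cells n l (x.1, x.2.-1).

Definition adj_cell : rel cell :=
  fun x y => ((x.1 == y.1) && ((x.2.+1 == y.2) || (y.2.+1 == x.2)))
          || ((x.2 == y.2) && ((x.1.+1 == y.1) || (y.1.+1 == x.1))).

Definition cells_connected (S : pred cell) : Prop :=
  forall x y, S x -> S y ->
    exists p : seq cell, [/\ path adj_cell x p, last x p = y & all S p].

Definition no_2x2_square (S : pred cell) : Prop :=
  forall r c, ~~ [&& S (r, c), S (r.+1, c), S (r, c.+1) & S (r.+1, c.+1)].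

Definition is_ribbon (S : pred cell) : Prop :=
  (exists x, S x) /\ cells_connected S /\ no_2x2_square S.

(* Cells of E / D, with D = delta_n / l and E = delta_(n+1) / mu,
   leftmost cells aligned. *)
Definition ribbon_cells (n : nat) (l mu : seq nat) : pred cell :=
  fun x => skew_cells n.+1 mu x && ~~ shifted_cells n l x.

Definition ribbon_addition (n : nat) (l mu : seq nat) : Prop :=
  (forall x, shifted_cells n l x -> skew_cells n.+1 mu x)
  /\ is_ribbon (ribbon_cells n l mu).

(* In Japanese notation (French diagram rotated 135 degrees
   clockwise) the rows of the diagram are the SW-NE diagonals; all cells of
   delta_N have row and column < N. *)
Definition sw_ne_diagonals_met (N : nat) (S : pred cell) : nat :=
  count (fun r => has (fun c => S (r, c)) (iota 0 N)) (iota 0 N).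

(* Main.v *)
Require Import Defs.
From mathcomp Require Import all_boot.
Set Warnings "-notation-overridden".
From mathcomp Require Import zify.
Set Implicit Arguments. Unset Strict Implicit.
Set Warnings "-notation-overridden".

Lemma part_facts (s : seq nat) : is_partition s ->
  (forall j, nth 0 s j.+1 <= nth 0 s j) /\ (forall j, j < size s -> 0 < nth 0 s j).
Proof.
case/andP=> /sortedP Hs /all_nthP Hp; split; last exact: Hp.
move=> j; case: (ltnP j.+1 (size s)) => h; first exact: (Hs 0 j h).
by rewrite nth_default.
Qed.

Lemma stair_facts m (s : seq nat) : is_partition s -> sub_staircase m s ->
  forall j, (j <= m -> nth 0 s j + j <= m) /\ (m <= j -> nth 0 s j = 0).
Proof.
move=> Hp /allP Hst j; have [_ Hpos] := part_facts Hp.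
case: (ltnP j (size s)) => h.
  have := Hst j; rewrite mem_iota add0n leq0n /= => /(_ h) H; have := Hpos j h.
  split => ? ; lia.
by rewrite nth_default //; split => ?; lia.
Qed.

Lemma lam_facts n lam : dyck_shape n lam ->
  [/\ forall j, j < n -> nth 0 lam j + j < n,
      forall j, n <= j -> nth 0 lam j = 0
    & forall j, nth 0 lam j.+1 <= nth 0 lam j].
Proof.
case/andP=> Hp Hs; have [Ha _] := part_facts Hp.
have H := stair_facts Hp Hs.
split=> // j hj; have [H1 H2] := H j.
  case: (ltnP j n.-1) => h; first lia.
  rewrite H2 //; lia.
by apply: H2; lia.
Qed.

Lemma mu_facts n mu : dyck_shape n.+1 mu ->
  [/\ forall j, n <= j -> nth 0 mu j = 0
    & forall j, nth 0 mu j.+1 <= nth 0 mu j].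
Proof.
case/andP=> Hp Hs; have [Ha _] := part_facts Hp.
have H := stair_facts Hp Hs.
by split=> // j hj; have [H1 H2] := H j; apply: H2.
Qed.

Lemma ribbonE n lam mu r c :
  (forall j, j < n -> nth 0 lam j + j < n) -> nth 0 lam n = 0 ->
  ribbon_cells n lam mu (r, c) = (r <= n) && (nth 0 mu r <= c <= nth 0 lam r).
Proof.
move=> H1 H2; rewrite /ribbon_cells /shifted_cells /skew_cells /=.
case: (ltngtP r n) => h.
- have H3 := H1 r h.
  case: (leqP c (nth 0 lam r)) => hc.
    have -> : r + c < n.+1 by lia. rewrite /=.
    case: (leqP (nth 0 mu r) c) => //= _.
    by apply/negP => /and3P[? ? ?]; lia.
  case: (ltnP (r + c.-1) n) => h2.
    have -> : (nth 0 lam r <= c.-1) by lia. have -> : 0 < c by lia.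
    by rewrite /= ?andbF ?andbT.
  have -> : (r + c < n.+1) = false by lia. by rewrite /= ?andbF.
- have -> : (r + c < n.+1) = false by lia. done.
- subst r; rewrite H2.
  case: c => [|c]; first by rewrite /= addn0 ltnSn leq0n andbT.
  have -> : (n + c.+1 < n.+1) = false by lia. by rewrite /= andbF.
Qed.

Lemma seq_eq_pos (s t : seq nat) :
  (forall j, j < size s -> 0 < nth 0 s j) ->
  (forall j, j < size t -> 0 < nth 0 t j) ->
  (forall r, nth 0 s r = nth 0 t r) -> s = t.
Proof.
move=> Hs Ht E.
have Hsz : size s = size t.
  case: (ltngtP (size s) (size t)) => // h.
  - have := Ht _ h; rewrite -E nth_default //; lia.
  - have := Hs _ h; rewrite E nth_default //; lia.
apply: (eq_from_nth (x0:=0)) Hsz _ => r _; exact: E.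
Qed.

Lemma count_ge k m : k <= m -> count (fun r => k <= r) (iota 0 m) = m - k.
Proof.
move=> km; rewrite -{1}(subnKC km) iotaD count_cat add0n.
rewrite (eq_in_count (a2 := pred0)); last first.
  by move=> r; rewrite mem_iota /=; lia.
rewrite (eq_in_count (a2 := predT) (s := iota k _)); last first.
  by move=> r; rewrite mem_iota /=; lia.
by rewrite count_pred0 count_predT size_iota.
Qed.

Lemma diagE n lam mu :
  (forall j, j < n -> nth 0 lam j + j < n) -> nth 0 lam n = 0 ->
  sw_ne_diagonals_met n.+1 (ribbon_cells n lam mu) =
  count (fun r => nth 0 mu r <= nth 0 lam r) (iota 0 n.+1).
Proof.
move=> H1 H2; apply: eq_in_count => r; rewrite mem_iota add0n => /andP[_ hr].
apply/hasP/idP.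
  by case=> c _; rewrite ribbonE //; lia.
move=> h; exists (nth 0 mu r); last by rewrite ribbonE //; lia.
rewrite mem_iota add0n leq0n /=.
case: (ltnP r n) => h2; first by have := H1 r h2; lia.
have E : r = n by lia.
by subst r; rewrite H2 in h; lia.
Qed.

Definition reach (S : pred cell) x y :=
  exists p : seq cell, [/\ path adj_cell x p, last x p = y & all S p].

Lemma adj_sym x y : adj_cell x y -> adj_cell y x.
Proof. by case: x y => [a b] [c d]; rewrite /adj_cell /=; lia. Qed.

Lemma reach_refl (S : pred cell) x : reach S x x.
Proof. by exists [::]. Qed.

Lemma reach_trans (S : pred cell) x y z : reach S x y -> reach S y z -> reach S x z.
Proof.
case=> p [hp ly ap] [q [hq lz aq]]; exists (p ++ q).
by rewrite cat_path last_cat ly hp hq lz all_cat ap aq.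
Qed.

Lemma reach_step (S : pred cell) x y z : S y -> adj_cell x y -> reach S y z -> reach S x z.
Proof. by move=> Sy axy [p [hp lp ap]]; exists (y :: p); rewrite /= axy hp lp Sy ap. Qed.

Lemma reach_sym (S : pred cell) x y : S x -> reach S x y -> reach S y x.
Proof.
move=> Sx [p [hp <- ap]]; elim: p x Sx hp ap => [|z p IH] x Sx /=.
  by move=> _ _; exact: reach_refl.
move=> /andP[axz hp] /andP[Sz ap].
apply: reach_trans (IH z Sz hp ap) _.
by exists [:: x]; rewrite /= adj_sym // Sx.
Qed.

Lemma cross (S : pred cell) r x p : path adj_cell x p -> S x -> all S p ->
  x.1 <= r -> r < (last x p).1 -> exists c, S (r, c) && S (r.+1, c).
Proof.
elim: p x => [|z p IH] x /=; first by move=> _ _ _; lia.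
move=> /andP[axz hp] Sx /andP[Sz ap] hx hl.
case: (leqP z.1 r) => hz; first exact: (IH z hp Sz ap hz hl).
have [e1 e2 e3] : [/\ x.1 = r, z.1 = r.+1 & z.2 = x.2].
  by move: axz; rewrite /adj_cell => axz; split; lia.
exists x.2; apply/andP; split.
  by rewrite -e1 -surjective_pairing.
by rewrite -e3 -e2 -surjective_pairing.
Qed.

Definition muk (lam : seq nat) k := mkseq (fun r => nth 0 lam r + 1) k ++ drop k.+1 lam.

Lemma nth_muk lam k r :
  nth 0 (muk lam k) r = if r < k then nth 0 lam r + 1 else nth 0 lam r.+1.
Proof.
rewrite /muk nth_cat size_mkseq; case: ifP => h; first by rewrite nth_mkseq.
rewrite nth_drop; congr nth; lia.
Qed.

Lemma size_muk lam k : size (muk lam k) = k + (size lam - k.+1).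
Proof. by rewrite /muk size_cat size_mkseq size_drop. Qed.

Lemma muk_dyck n lam k : dyck_shape n lam -> k <= n -> dyck_shape n.+1 (muk lam k).
Proof.
move=> Hl hk; have [H1 H2 Ha] := lam_facts Hl.
have [_ Hpos] := part_facts (proj1 (andP Hl)).
apply/andP; split; [apply/andP; split|].
- apply/(sortedP 0) => j hj; rewrite /= !nth_muk.
  have := Ha j; have := Ha j.+1.
  case: (ltnP j k) => h1; case: (ltnP j.+1 k) => h2; lia.
- apply/(all_nthP 0) => j; rewrite size_muk nth_muk => hj.
  case: (ltnP j k) => h1; first lia.
  apply: Hpos; lia.
- apply/allP => j; rewrite mem_iota add0n => /andP[_ hj]; rewrite nth_muk /=.
  case: (ltnP j k) => h1; first by have := H1 j; lia.
  case: (ltnP j.+1 n) => h2; first by have := H1 j.+1 h2; lia.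
  by rewrite H2.
Qed.

Lemma muk_rib n lam k : dyck_shape n lam -> k <= n -> ribbon_addition n lam (muk lam k).
Proof.
move=> Hl hk; have [H1 H2 Ha] := lam_facts Hl.
have G2 := H2 n (leqnn n).
split.
  case=> r c; rewrite /shifted_cells /skew_cells /= nth_muk => h.
  have := Ha r; case: (ltnP r k); lia.
split; [|split].
- by exists (n, 0); rewrite ribbonE // nth_muk ltnNge hk /= G2 H2 // leqnn.
- move=> x y Sx Sy.
  have toN : forall z, ribbon_cells n lam (muk lam k) z ->
      reach (ribbon_cells n lam (muk lam k)) z (n, 0).
    case=> r c; rewrite ribbonE // => /andP[hr hc].
    move: (n - r) (subnKC hr) => d hd {hr}.
    elim: d r c hd hc => [|d IH] r c hd.
      rewrite addn0 in hd; subst r.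
      rewrite nth_muk; case: ifP => h; first lia.
      rewrite H2 // => hc0.
      have -> : c = 0 by lia. exact: reach_refl.
    rewrite nth_muk; case: ifP => h; first lia.
    move=> /andP[h1 h2].
    have row : forall c', nth 0 lam r.+1 <= c' <= c ->
      reach (ribbon_cells n lam (muk lam k)) (r, c) (r, c').
      move=> c' /andP[hc1 hc2].
      move: (c - c') (subnKC hc2) => e he.
      elim: e c he h1 h2 {hc2} => [|e IHe] c he h1 h2.
        by rewrite addn0 in he; subst c; exact: reach_refl.
      apply: (reach_step (y := (r, c' + e))).
      + rewrite ribbonE // nth_muk h; apply/andP; split; first lia.
        lia.
      + rewrite /adj_cell /=; lia.
      + apply: IHe => //; lia.
    apply: reach_trans (row (nth 0 lam r.+1) _) _; first lia.
    apply: (reach_step (y := (r.+1, nth 0 lam r.+1))).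
    + rewrite ribbonE // nth_muk; have := Ha r.+1.
      case: ifP => h'; lia.
    + rewrite /adj_cell /=; lia.
    + apply: IH; first lia. rewrite nth_muk; have := Ha r.+1; case: ifP => h'; lia.
  apply: reach_trans (toN x Sx) _.
  apply: reach_sym => //; exact: toN.
- move=> r c; rewrite !ribbonE // !nth_muk.
  have := Ha r; have := Ha r.+1.
  case: (ltnP r k) => h1; case: (ltnP r.+1 k) => h2; lia.
Qed.

Lemma uniq_mu n lam mu i : dyck_shape n lam -> dyck_shape n.+1 mu ->
  ribbon_addition n lam mu ->
  sw_ne_diagonals_met n.+1 (ribbon_cells n lam mu) = i -> i <= n.+1 ->
  forall r, nth 0 mu r = if r < n.+1 - i then nth 0 lam r + 1 else nth 0 lam r.+1.
Proof.
move=> Hl Hm [Hinc [_ [Hcon H2x2]]] Hc hi.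
have [H1 H2 Ha] := lam_facts Hl.
have [F2 Fa] := mu_facts Hm.
have G2 := H2 n (leqnn n).
have incl : forall r, r < n -> nth 0 mu r <= nth 0 lam r + 1.
  move=> r hr; have := Hinc (r, (nth 0 lam r).+1).
  rewrite /shifted_cells /skew_cells /=; have := H1 r hr.
  move=> h /(_ _)/andP[]; [|lia].
  by rewrite leqnn andbT; lia.
have step : forall r, r < n -> nth 0 mu r <= nth 0 lam r ->
    nth 0 mu r.+1 <= nth 0 lam r.+1 /\ nth 0 mu r = nth 0 lam r.+1.
  move=> r hr P.
  have Sx : ribbon_cells n lam mu (r, nth 0 mu r) by rewrite ribbonE //; lia.
  have Sy : ribbon_cells n lam mu (n, 0) by rewrite ribbonE // F2 // G2 leqnn.
  have [p [hp lp ap]] := Hcon _ _ Sx Sy.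
  have hl : r < (last (r, nth 0 mu r) p).1 by rewrite lp.
  have [c /andP[c1 c2]] := cross hp Sx ap (leqnn r) hl.
  rewrite !ribbonE // in c1 c2.
  have hC := H2x2 r (nth 0 mu r); rewrite !ribbonE // in hC.
  have := Fa r; have := Ha r.
  move=> ha hb; split; lia.
have Pn : nth 0 mu n <= nth 0 lam n by rewrite F2.
have exP : exists r, nth 0 mu r <= nth 0 lam r := ex_intro _ n Pn.
case: (ex_minnP exP) => k Pk Kmin.
have kn : k <= n := Kmin n Pn.
have up : forall d, k + d <= n -> nth 0 mu (k + d) <= nth 0 lam (k + d).
  elim=> [|d IH] hd; first by rewrite addn0.
  rewrite addnS; apply: (proj1 (step _ _ _)); [lia | apply: IH; lia].
have PE : forall r, r <= n -> (nth 0 mu r <= nth 0 lam r) = (k <= r).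
  move=> r hr; apply/idP/idP; first exact: Kmin.
  by move=> kr; rewrite -(subnKC kr); apply: up; lia.
have Hk : k = n.+1 - i.
  move: Hc; rewrite diagE // (eq_in_count (a2 := fun r => k <= r)).
    by rewrite count_ge //; lia.
  by move=> r; rewrite mem_iota add0n => /andP[_ hr]; apply: PE.
rewrite -Hk => r.
case: (ltnP r k) => hr.
  have nP : ~~ (nth 0 mu r <= nth 0 lam r) by rewrite PE ?ltnNge ?hr //; lia.
  have := incl r (leq_trans hr kn); lia.
case: (ltnP r n) => hrn.
  have hP : nth 0 mu r <= nth 0 lam r by rewrite PE //; lia.
  by have [_ ->] := step r hrn hP.
rewrite F2 // H2 //; lia.
Qed.

Theorem mainTheorem2 (n : nat) (lam : seq nat) (i : nat) :
  dyck_shape n lam -> 1 <= i <= n.+1 ->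
  exists! mu : seq nat,
    [/\ dyck_shape n.+1 mu, ribbon_addition n lam mu
      & sw_ne_diagonals_met n.+1 (ribbon_cells n lam mu) = i].
Proof.
move=> Hl /andP[i1 i2].
have [H1 H2 Ha] := lam_facts Hl.
have G2 := H2 n (leqnn n).
have hk : n.+1 - i <= n by lia.
exists (muk lam (n.+1 - i)); split.
  split; [exact: muk_dyck | exact: muk_rib |].
  rewrite diagE // (eq_in_count (a2 := fun r => n.+1 - i <= r)).
    by rewrite count_ge; lia.
  move=> r _; rewrite /= nth_muk; have := Ha r; case: ifP => h; lia.
move=> mu' [Hd Hr Hc].
have [_ Pm] := part_facts (proj1 (andP Hd)).
have Dk := muk_dyck Hl hk.
have [_ Pk] := part_facts (proj1 (andP Dk)).
apply: seq_eq_pos => // r.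
by rewrite nth_muk (uniq_mu Hl Hd Hr Hc i2).
Qed.
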